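(* Let $f_0(1)=0$ and $f_0(n)=1$ for $n\ge2$, and let $m\ge1$. For $n>3$ and $1\le k\le\lfloor n/2\rfloor$, $c_m(n,k)$ equals the number of words of length $n-3$ over the alphabet $\{0,1,\ldots,m\}$ with exactly $k-1$ letters equal to $1$ and in which all nonzero letters are isolated (no two nonzero letters are adjacent). Moreover, for $1\le k\le\lfloor n/2\rfloor$, \[c_m(n,k)=\sum_{j=0}^{\lfloor\frac{n}{2}\rfloor-k}(m-1)^{j}\binom{j+k-1}{k-1}\binom{n-k-j-1}{k+j-1},\] and $c_m(n,k)=0$ when $\lfloor n/2\rfloor<k\le n$.
   Context: For $m\ge 1$, $f_m$ is the invert transform of $f_{m-1}$, i.e. $f_m(n)=f_{m-1}(n)+\sum_{i=1}^{n-1}f_{m-1}(i)f_m(n-i)$ for $n\ge1$. For $m\ge1$ the numbers $c_m(n,k)$, $0\le k\le n$, are defined by $c_m(0,0)=1$, $c_m(n,0)=0$ for $n\ge1$, and $c_m(n,k)=\sum_{i=1}^{n-k+1}f_{m-1}(i)\,c_m(n-i,k-1)$ for $1\le k\le n$. The convention $0^0=1$ is used. *)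

(* Defs.v *)
From mathcomp Require Import all_boot.
Set Implicit Arguments. Unset Strict Implicit. Unset Printing Implicit Defensive.

(* f_0(1) = 0, f_0(n) = 1 for n >= 2 (value at 0 is irrelevant; set to 0). *)
Definition f0 (n : nat) : nat := if 1 < n then 1 else 0.

(* The list [h 0; h 1; ...; h n] of the invert transform h of g, where
   h n = g n + \sum_{i=1}^{n-1} g i * h (n - i) for n >= 1 (h 0 := 0). *)
Fixpoint invert_seq (g : nat -> nat) (n : nat) : seq nat :=
  match n with
  | 0 => [:: 0]
  | n'.+1 =>
      let s := invert_seq g n' in
      rcons s (g n + \sum_(1 <= i < n) g i * nth 0 s (n - i))
  end.

Definition invert (g : nat -> nat) (n : nat) : nat := nth 0 (invert_seq g n) n.

Fixpoint f (m : nat) : nat -> nat :=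
  match m with
  | 0 => f0
  | m'.+1 => invert (f m')
  end.

Fixpoint c (m n k : nat) {struct k} : nat :=
  match k with
  | 0 => (n == 0)
  | k'.+1 => \sum_(1 <= i < n - k + 2) f m.-1 i * c m (n - i) k'
  end.

Definition isolated_nonzero (m : nat) (w : seq 'I_m.+1) : bool :=
  all (fun p : 'I_m.+1 * 'I_m.+1 => (val p.1 == 0) || (val p.2 == 0))
      (zip w (behead w)).

Definition nwords (m L j : nat) : nat :=
  #|[set w : L.-tuple 'I_m.+1 |
      (count (fun x : 'I_m.+1 => val x == 1) w == j) && isolated_nonzero w]|.

(* Main.v *)
Require Import Defs.
From mathcomp Require Import all_boot zify.

Lemma invert_seq_size g n : size (invert_seq g n) = n.+1.
Proof. by elim: n => //= n IH; rewrite size_rcons IH. Qed.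

Lemma invert_seq_nth g n k : k <= n -> nth 0 (invert_seq g n) k = invert g k.
Proof.
elim: n k => [|n IH] k hk; first by case: k hk.
rewrite leq_eqVlt in hk; case/orP: hk => [/eqP -> //|hk].
by rewrite /= nth_rcons invert_seq_size hk IH.
Qed.

Lemma invertE g n : invert g n.+1 = g n.+1 + \sum_(1 <= i < n.+1) g i * invert g (n.+1 - i).
Proof.
rewrite /invert /= nth_rcons invert_seq_size ltnn eqxx; congr (_ + _).
apply: eq_big_nat => i /andP[h1 h2]; rewrite invert_seq_nth //; lia.
Qed.

Definition grecd (g : nat -> nat) a :=
  [/\ g 0 = 0, g 1 = 0, g 2 = 1 & forall n, g n.+3 = g n.+2 + a * g n.+1].
Lemma conv_rec g a (hg : grecd g a) (v : nat -> nat) n :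
  \sum_(i < n.+3) g i * v (n.+2 - i) =
  \sum_(i < n.+2) g i * v (n.+1 - i) + a * \sum_(i < n.+1) g i * v (n - i) + v n.
Proof.
case: hg => g0 g1 g2 gS.
rewrite !big_ord_recl /= /bump !leq0n !add1n g0 g1 g2 !mul0n !add0n ?subn0 ?mul1n.
under eq_bigr do rewrite gS mulnDl -mulnA !subSS.
rewrite big_split /= big_distrr /=.
under [in RHS]eq_bigr do rewrite subSS.
rewrite !subSS subn0 addnC; reflexivity.
Qed.
Lemma invert_conv g n (g0 : g 0 = 0) :
  invert g n.+1 = g n.+1 + \sum_(i < n.+2) g i * invert g (n.+1 - i).
Proof.
rewrite invertE.
have ->: \sum_(i < n.+2) g i * invert g (n.+1 - i) = \sum_(0 <= i < n.+2) g i * invert g (n.+1 - i) by rewrite big_mkord.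
rewrite [in RHS]big_ltn // g0 mul0n add0n.
rewrite [in RHS]big_nat_recr //=.
rewrite (subnn n.+1).
have ->: invert g 0 = 0 by [].
by rewrite muln0 addn0.
Qed.

Lemma f_rec m : grecd (f m) m.
Proof.
elim: m => [|m [g0 g1 g2 gS]]; first by split => // n; rewrite /f /f0 /= mul0n.
have fS : f m.+1 = invert (f m) by [].
rewrite fS; split.
- by [].
- by rewrite invertE big_geq // g1.
- by rewrite invertE big_nat1 g1 g2.
move=> n; rewrite !invert_conv // (@conv_rec (f m) m); last by split.
rewrite gS [invert (f m) n.+1]invert_conv // mulSn !mulnDr; lia.
Qed.

Lemma c_vanish m k n : n < 2 * k -> c m n k = 0.
Proof.
have [g0 g1 _ _] := f_rec m.-1.
elim: k n => [|k IH] n hn; first by rewrite muln0 in hn.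
rewrite /= big_nat_cond big1 // => i /andP[/andP[h1 h2] _].
case: (ltnP i 2) => hi.
  have -> : i = 1 by lia.
  by rewrite g1.
rewrite IH ?muln0 //; lia.
Qed.

Lemma c_conv m n k : c m n k.+1 = \sum_(i < n.+1) f m.-1 i * c m (n - i) k.
Proof.
have [g0 g1 _ _] := f_rec m.-1.
case: (leqP n k) => hnk.
  rewrite c_vanish; last by lia.
  rewrite big1 // => i _.
  case: (posnP i) => [->|hi]; first by rewrite g0.
  rewrite c_vanish ?muln0 //.
  have := ltn_ord i; lia.
rewrite -(big_mkord xpredT (fun i => f m.-1 i * c m (n - i) k)).
rewrite (big_cat_nat _ _ (n:=1)) //= ; try lia.
rewrite big_nat1 g0 mul0n add0n.
rewrite [in RHS](big_cat_nat _ _ (n:= n - k.+1 + 2)) //=; try lia.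
rewrite [X in _ = _ + X]big_nat_cond [X in _ = _ + X]big1 ?addn0 // => i /andP[/andP[h1 h2] _].
rewrite c_vanish ?muln0 //; lia.
Qed.

Lemma c_rec m n k : c m n.+2 k.+1 = c m n.+1 k.+1 + m.-1 * c m n k.+1 + c m n k.
Proof.
by rewrite !c_conv (@conv_rec (f m.-1) m.-1 (f_rec m.-1) (fun j => c m j k)).
Qed.

Lemma c0 m n : c m n 0 = (n == 0).
Proof. by []. Qed.

Definition X (a K N j : nat) := a ^ j * 'C(j + K, K) * 'C(N + K - j, K + j).
Definition T a K N := \sum_(j < N.+1) X a K N j.

Lemma X_pascal a K N j : X a K N.+2 j = X a K N.+1 j +
  (if j is j'.+1 then a * X a K N j' else 0) + (if K is K'.+1 then X a K' N.+2 j else 0).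
Proof.
rewrite /X; case: j => [|j]; case: K => [|K].
- by rewrite !addn0 !subn0 !bin0.
- rewrite ?add0n ?addn0 ?subn0 ?binn ?expn0 ?mul1n ?add0n.
  have -> : N.+2 + K.+1 = (N.+1 + K.+1).+1 by lia.
  rewrite binS.
  have -> : N.+1 + K.+1 = N.+2 + K by lia.
  lia.
- rewrite ?addn0 ?add0n ?bin0 ?muln1 ?addn0.
  case: (leqP j N) => hj.
    have -> : N.+2 - j.+1 = (N - j).+1 by lia.
    have -> : N.+1 - j.+1 = N - j by lia.
    rewrite binS expnS; lia.
  rewrite !bin_small; lia.
- case: (leqP j (N + K.+1)) => hj.
    have -> : N.+2 + K.+1 - j.+1 = (N + K.+1 - j).+1 by lia.
    have -> : N.+1 + K.+1 - j.+1 = N + K.+1 - j by lia.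
    have -> : N.+2 + K - j.+1 = N + K.+1 - j by lia.
    have -> : K.+1 + j.+1 = (K.+1 + j).+1 by lia.
    have -> : K + j.+1 = K.+1 + j by lia.
    have -> : j.+1 + K.+1 = (j + K.+1).+1 by lia.
    have -> : j.+1 + K = j + K.+1 by lia.
    rewrite !binS expnS; lia.
  have h1 : 'C(N.+2 + K.+1 - j.+1, K.+1 + j.+1) = 0 by rewrite bin_small //; lia.
  have h2 : 'C(N.+1 + K.+1 - j.+1, K.+1 + j.+1) = 0 by rewrite bin_small //; lia.
  have h3 : 'C(N + K.+1 - j, K.+1 + j) = 0 by rewrite bin_small //; lia.
  have h4 : 'C(N.+2 + K - j.+1, K + j.+1) = 0 by rewrite bin_small //; lia.
  by rewrite h1 h2 h3 h4 !muln0.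
Qed.

Lemma T_ext a K N : \sum_(j < N.+2) X a K N j = T a K N.
Proof.
rewrite big_ord_recr /= /X (bin_small (n:=N + K - N.+1)) ?muln0 ?addn0 //; lia.
Qed.

Lemma T_rec a K N : T a K N.+2 = T a K N.+1 + a * T a K N + (if K is K'.+1 then T a K' N.+2 else 0).
Proof.
rewrite {1}/T; under eq_bigr do rewrite X_pascal.
rewrite !big_split /=.
rewrite T_ext big_ord_recl /=.
congr (_ + _ + _).
  rewrite add0n -big_distrr /=; congr (_ * _); exact: T_ext.
case: K => [|K]; first by rewrite big1.
by [].
Qed.

Lemma T0 a K : T a K 0 = 1.
Proof. by rewrite /T big_ord1 /X expn0 add0n subn0 addn0 binn. Qed.

Lemma T1 a K : T a K 1 = K.+1.
Proof.
rewrite /T big_ord_recr big_ord1 /X /= expn0 add0n subn0 addn0 binn.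
rewrite (bin_small (n := 1 + K - 1)); last by lia.
by rewrite muln0 addn0 mul1n add1n binSn mul1n.
Qed.

Lemma cbase0 m K : c m (2 * K).+2 K.+1 = 1.
Proof.
elim: K => [|K IH]; first by rewrite c_rec !(@c_vanish _ 1) ?muln0.
rewrite c_rec !(@c_vanish _ K.+2); try lia.
have -> : 2 * K.+1 = (2 * K).+2 by lia.
by rewrite IH muln0.
Qed.

Lemma cbase1 m K : c m (2 * K).+3 K.+1 = K.+1.
Proof.
elim: K => [|K IH]; first by rewrite c_rec (cbase0 m 0) (@c_vanish _ 1) ?muln0.
rewrite c_rec cbase0 (@c_vanish _ K.+2 (2 * K.+1).+1); last by lia.
have -> : (2 * K.+1).+1 = (2 * K).+3 by lia.
rewrite IH; lia.
Qed.

Lemma c_T_gen m K (Hlast : forall N, c m (N + 2 * K).+2 K = (if K is K'.+1 then T m.-1 K' N.+2 else 0)) N :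
  c m (N + 2 * K).+2 K.+1 = T m.-1 K N.
Proof.
suff H : forall N, c m (N + 2 * K).+2 K.+1 = T m.-1 K N /\ c m (N.+1 + 2 * K).+2 K.+1 = T m.-1 K N.+1.
  by case: (H N).
elim => [|{}N [IH0 IH1]].
  by rewrite add0n add1n cbase0 T0 cbase1 T1.
split => //.
rewrite T_rec -IH0 -IH1 -Hlast.
have -> : (N.+2 + 2 * K).+2 = (N + 2 * K).+2.+2 by lia.
by rewrite c_rec addSn.
Qed.

Lemma c_T m K N : c m (N + 2 * K).+2 K.+1 = T m.-1 K N.
Proof.
elim: K N => [|K IHK] N; apply: c_T_gen => {}N //.
rewrite -IHK; congr (c m _ _); lia.
Qed.

Lemma iso_cons m (x : 'I_m.+1) (t : seq 'I_m.+1) :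
  isolated_nonzero (x :: t) =
  (if t is y :: _ then (val x == 0) || (val y == 0) else true) && isolated_nonzero t.
Proof. by case: t. Qed.

Lemma sum_tuple0 (T : finType) (F : 0.-tuple T -> nat) : \sum_(t : 0.-tuple T) F t = F [tuple].
Proof. by rewrite (big_pred1 [tuple]) // => t /=; apply/esym/eqP; exact: tuple0. Qed.

Lemma sum_tuple_cons (T : finType) n (F : n.+1.-tuple T -> nat) :
  \sum_(t : n.+1.-tuple T) F t = \sum_(x : T) \sum_(t : n.-tuple T) F [tuple of x :: t].
Proof.
rewrite pair_big /=.
rewrite (reindex (fun p : T * n.-tuple T => [tuple of p.1 :: p.2])) //=.
exists (fun t => (thead t, [tuple of behead t])) => [[x t] _ | t _] /=.
  by congr (_, _); apply: val_inj.
by rewrite -tuple_eta.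
Qed.

Definition Pw m j (w : seq 'I_m.+1) : bool :=
  (count (fun x : 'I_m.+1 => val x == 1) w == j) && isolated_nonzero w.
Definition S m L j := \sum_(w : L.-tuple 'I_m.+1) Pw m j w.
Definition Q m (b : bool) j L := \sum_(w : L.-tuple 'I_m.+1)
  ((b + count (fun x : 'I_m.+1 => val x == 1) w == j) && isolated_nonzero w).

Lemma nwords_S m L j : nwords m L j = S m L j.
Proof.
rewrite /nwords -sum1_card big_mkcond /=; apply: eq_bigr => w _.
by rewrite inE /Pw; case: (_ && _).
Qed.

Lemma Inner m L j (x : 'I_m.+1) :
  \sum_(t : L.+1.-tuple 'I_m.+1) Pw m j (x :: t) =
  if val x == 0 then S m L.+1 j else Q m (val x == 1) j L.
Proof.
case: eqP => hx.
  apply: eq_bigr => t _; rewrite /Pw iso_cons /= hx /=.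
  by case: (tval t) => [|y t'].
rewrite sum_tuple_cons (bigD1 ord0) //= [X in _ + X = _]big1 ?addn0.
  apply: eq_bigr => t _; rewrite /Pw /= !iso_cons /=.
  have -> : (val x == 0) = false by apply/eqP.
  by rewrite add0n; case: (tval t).
move=> y hy; apply: big1 => t _; rewrite /Pw /= iso_cons /=.
have -> : (val x == 0) = false by apply/eqP.
have -> : (val y == 0) = false by apply: contraNF hy => /eqP h; apply/eqP; apply: val_inj.
by rewrite andbF.
Qed.

Lemma Qfalse m j L : Q m false j L = S m L j.
Proof. by apply: eq_bigr => t _; rewrite add0n. Qed.

Lemma Qtrue m j L : Q m true j L = if j is j'.+1 then S m L j' else 0.
Proof.
case: j => [|j]; first by apply: big1 => t _.
by apply: eq_bigr => t _; rewrite add1n eqSS.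
Qed.

Lemma S_rec a L j : S a.+1 L.+2 j = S a.+1 L.+1 j + a * S a.+1 L j + (if j is j'.+1 then S a.+1 L j' else 0).
Proof.
rewrite {1}/S sum_tuple_cons.
under eq_bigr do rewrite Inner.
rewrite !big_ord_recl /= Qtrue.
under eq_bigr do rewrite /bump !leq0n !add1n /= Qfalse.
rewrite sum_nat_const card_ord; lia.
Qed.

Lemma S0 m j : S m 0 j = (j == 0).
Proof. by rewrite /S sum_tuple0 /Pw /= eq_sym; case: (j == 0). Qed.

Lemma S1 a j : S a.+1 1 j = (j == 0) + (j == 1) + a * (j == 0).
Proof.
rewrite /S sum_tuple_cons.
under eq_bigr do rewrite sum_tuple0 /Pw /= addn0 andbT.
rewrite !big_ord_recl /=.
rewrite sum_nat_const card_ord !(eq_sym _ j); lia.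
Qed.

Lemma c_S a : forall L j, c a.+1 L.+3 j.+1 = S a.+1 L j.
Proof.
suff H : forall L, (forall j, c a.+1 L.+3 j.+1 = S a.+1 L j) /\ (forall j, c a.+1 L.+4 j.+1 = S a.+1 L.+1 j).
  by move=> L j; case: (H L).
elim => [|L [IH0 IH1]].
  split => -[|j].
  - by rewrite (cbase1 _ 0) S0.
  - by rewrite S0 c_vanish //; lia.
  - by rewrite S1 c_rec (cbase1 _ 0) (cbase0 _ 0) /= muln1 addn0.
  - case: j => [|j].
      by rewrite S1 (cbase0 _ 1) muln0.
    by rewrite S1 c_vanish; [rewrite /= muln0 | lia].
split => // j.
rewrite c_rec S_rec IH1 IH0.
by case: j => [|j] //; rewrite IH0.
Qed.

Theorem corollary29 (m : nat) (hm : 1 <= m) :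
  (forall n k, 3 < n -> 1 <= k -> k <= n %/ 2 ->
     c m n k = nwords m (n - 3) (k - 1)) /\
  (forall n k, 1 <= k -> k <= n %/ 2 ->
     c m n k = \sum_(0 <= j < n %/ 2 - k + 1)
                 (m - 1) ^ j * 'C(j + k - 1, k - 1) * 'C(n - k - j - 1, k + j - 1)) /\
  (forall n k, n %/ 2 < k -> k <= n -> c m n k = 0).
Proof.
case: m hm => [|a] // _.
split; [|split].
- move=> n k hn hk hk2.
  have [L ->] : exists L, n = L.+3 by exists (n - 3); lia.
  have [j ->] : exists j, k = j.+1 by exists (k - 1); lia.
  have -> : L.+3 - 3 = L by lia.
  have -> : j.+1 - 1 = j by lia.
  by rewrite nwords_S c_S.
- move=> n k hk hk2.
  have [K ek] : exists K, k = K.+1 by exists (k - 1); lia.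
  have [N en] : exists N, n = (N + 2 * K).+2 by exists (n - 2 * k); lia.
  rewrite en ek c_T /T -(big_mkord xpredT).
  have -> : (N + 2 * K).+2 %/ 2 - K.+1 + 1 = N %/ 2 + 1 by lia.
  rewrite (big_cat_nat _ _ (n := N %/ 2 + 1)) //=; last by lia.
  rewrite [X in _ + X = _]big_nat_cond [X in _ + X = _]big1 ?addn0; last first.
    move=> j /andP[/andP[h1 h2] _]; rewrite /X (bin_small (n := N + K - j)) ?muln0 //; lia.
  apply: eq_big_nat => j /andP[h1 h2]; rewrite /X.
  have -> : a.+1 - 1 = a by lia.
  congr (_ ^ _ * 'C(_, _) * 'C(_, _)); lia.
- move=> n k h1 h2; apply: c_vanish; lia.
Qed.
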